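(* Let $G=(V,E)$ be an undirected graph with $n$ vertices and non-negative edge weights of maximum value $W$, let $K$ be a positive integer, and let $\varepsilon>0$. Let $s,t \in V$ be vertices with finite distance $d(s,t)$, set $r = \frac{\varepsilon}{2} d(s,t) + W$, and let $P$ be a shortest $s$-$t$ path in $G$. (i) If all vertices of $P$ lie in $V_r$, then the hop-distance from $s$ to $t$ in $H$ is at most $\lceil 2/\varepsilon\rceil$. (ii) If all vertices of $P$ lie in $V_r$, then $V(P)\cap A_{1/\varepsilon}(s)\cap A_{1/\varepsilon}(t) \neq \emptyset$. (iii) If $P$ contains a vertex of $V\setminus V_r$, then $(V(P)\setminus V_r)\cap A_{1/\varepsilon}(s)$ or $(V(P)\setminus V_r)\cap A_{1/\varepsilon}(t)$ is non-empty.
   Context: $d(u,v)$ is the weighted distance in $G$. For $v\in V$, $K[v]$ is a set of the $K$ vertices closest to $v$ in $G$ (including $v$, ties broken arbitrarily; the whole connected component of $v$ if it has fewer than $K$ vertices). $\mathrm{ball}(v,r)=\{u\in V: d(v,u)\le r\}$ and $V_r=\{v\in V:\mathrm{ball}(v,r)\subseteq K[v]\}$. $H$ is the auxiliary graph on vertex set $V$ with, for each $v\in V$, an edge (hop) from $v$ to every $v'\in K[v]\setminus\{v\}$, of weight $d(v,v')$; a hop may be taken from $v$ to $v'$ only when $v'\in K[v]$. The hop-distance from $x$ to $y$ in $H$ is the minimum number of hops on a walk in $H$ from $x$ to $y$. For a vertex $x$, $A_{1/\varepsilon}(x)$ is the set of vertices reachable from $x$ in $H$ by at most $\lceil 1/\varepsilon\rceil$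 hops. *)

(* Defs.v *)
From HB Require Import structures.
From mathcomp Require Import all_boot all_order all_algebra.
From mathcomp Require Import boolp classical_sets reals constructive_ereal ereal.
Set Implicit Arguments. Unset Strict Implicit. Unset Printing Implicit Defensive.
Import Order.TTheory GRing.Theory Num.Theory.
Local Open Scope ring_scope.
Local Open Scope classical_set_scope.

Section Defs.
Variables (R : realType) (T : finType).
(* the graph: vertex set T, symmetric edge relation e, weights w on edges *)
Variables (e : rel T) (w : T -> T -> R).

Definition walk_w (x : T) (p : seq T) : R :=
  \sum_(ij <- zip (x :: p) p) w ij.1 ij.2.

Definition gwalk (u v : T) (p : seq T) : bool := path e u p && (last u p == v).

Definition dist (u v : T) : \bar R :=
  ereal_inf [set (walk_w u p)%:E | p in [set p | gwalk u v p]].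

(* maximum edge weight W (0 if there are no edges) *)
Definition maxw : R := \big[Num.max/0]_(x : T) \big[Num.max/0]_(y : T | e x y) w x y.

Definition shortest_path (u v : T) (p : seq T) : Prop :=
  [/\ gwalk u v p, uniq (u :: p) & (walk_w u p)%:E = dist u v].

Definition comp (v : T) : {set T} := [set u | (dist v u < +oo)%E].

(* Kset v is a valid choice of K[v]: the K vertices closest to v (including v),
   ties broken arbitrarily, or the whole component if it has fewer than K
   vertices *)
Definition is_Knearest (K : nat) (Kset : T -> {set T}) : Prop :=
  forall v, [/\ v \in Kset v, Kset v \subset comp v,
     #|Kset v| = minn K #|comp v| &
     forall u x, u \in Kset v -> x \notin Kset v -> (dist v u <= dist v x)%E].

Definition ball (v : T) (r : R) : {set T} := [set u | (dist v u <= r%:E)%E].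

Definition Vr (Kset : T -> {set T}) (r : R) : {set T} :=
  [set v | ball v r \subset Kset v].

Definition hop (Kset : T -> {set T}) : rel T := fun v v' => (v' \in Kset v) && (v' != v).

(* y is reachable from x in H with at most m hops,
   i.e. the hop-distance from x to y is at most m *)
Definition hop_reach (Kset : T -> {set T}) (m : nat) (x y : T) : bool :=
  [exists p : m.+1.-tuple T, exists k : 'I_m.+1,
      path (hop Kset) x (take k p) && (last x (take k p) == y)].

Definition ceiln (x : R) : nat := `|Num.ceil x|%N.

Definition Aset (Kset : T -> {set T}) (eps : R) (x : T) : {set T} :=
  [set y | hop_reach Kset (ceiln eps^-1) x y].
End Defs.

(* Main.v *)
Require Import Defs.
From HB Require Import structures.
From mathcomp Require Import all_boot all_order all_algebra.
From mathcomp Require Import boolp classical_sets reals constructive_ereal ereal.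
From mathcomp Require Import ring lra zify.
Import Order.TTheory GRing.Theory Num.Theory.
Local Open Scope ring_scope.

Section Abstract.
Variables (R : realType) (T : finType) (Kset : T -> {set T}).

Definition Reach (m : nat) (x y : T) : Prop :=
  exists l, [/\ (size l <= m)%N, path (hop Kset) x l & last x l = y].

Lemma Reach0 x : Reach 0 x x.
Proof. by exists [::]. Qed.

Lemma ReachS m x y : Reach m x y -> Reach m.+1 x y.
Proof. by case=> l [? ? ?]; exists l; split => //; apply: leqW. Qed.

Lemma ReachK m x y z : Reach m x y -> z \in Kset y -> Reach m.+1 x z.
Proof.
case=> l [Hs Hp Hl] Hz.
have [->|Hne] := eqVneq z y; first by apply: ReachS; exists l.
exists (rcons l z); split.
- by rewrite size_rcons.
- by rewrite rcons_path Hp Hl /hop Hz Hne.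
- by rewrite last_rcons.
Qed.

Lemma Reach_hop m x y : Reach m x y -> hop_reach Kset m x y.
Proof.
case=> l [Hs Hp Hl].
have Hsz : size (l ++ nseq (m.+1 - size l) x) == m.+1.
  by rewrite size_cat size_nseq subnKC // leqW.
apply/existsP; exists (Tuple Hsz); apply/existsP.
have Hk : (size l < m.+1)%N by [].
exists (Ordinal Hk) => /=.
rewrite take_size_cat //.
by rewrite Hp Hl eqxx.
Qed.

Variables (v : nat -> T) (pre : nat -> R) (N : nat) (r c : R) (B : nat).
Hypothesis Hhop : forall i j, (i <= j)%N -> (j <= N)%N -> (i < B)%N ->
  pre j - pre i <= r -> v j \in Kset (v i).
Hypothesis Hstep : forall k, (k < N)%N -> pre k.+1 - pre k <= r - c.
Hypothesis Hmono : forall i j, (i <= j)%N -> (j <= N)%N -> pre i <= pre j.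
Hypothesis Hr : 0 <= r.

Lemma exmax (P : pred nat) m : forall a0, (N - a0 = m)%N -> (a0 <= N)%N -> P a0 ->
  exists a, [/\ (a0 <= a <= N)%N, P a & a = N \/ ~~ P a.+1].
Proof.
elim: m => [|m IH] a0 Hm Ha0 HP.
  exists a0; split => //; first by rewrite leqnn Ha0.
  by left; apply/eqP; rewrite eqn_leq Ha0 -subn_eq0 Hm.
case HP1 : (P a0.+1); last by exists a0; split => //; [rewrite leqnn Ha0|right; rewrite HP1].
have Ha1 : (a0 < N)%N by rewrite -subn_gt0 Hm.
have [a [H1 H2 H3]] := IH a0.+1 (ltac:(rewrite subnS Hm //)) Ha1 HP1.
exists a; split => //; case/andP: H1 => H1 H1'; rewrite H1' andbT; exact: ltnW.
Qed.

Lemma step m a : (a <= N)%N -> (forall j, (j <= a)%N -> Reach m (v 0) (v j)) ->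
  exists a', [/\ (a <= a')%N, (a' <= N)%N,
     (forall j, (j <= a')%N -> Reach m.+1 (v 0) (v j)) &
     a' = N \/ (B <= a')%N \/ pre a + c < pre a'].
Proof.
move=> HaN Hreach.
have [HaB|HaB] := leqP B a.
  exists a; split => //; first by move=> j /Hreach /ReachS.
  by right; left.
have [HaN'|HaN'] := eqVneq a N.
  exists a; split => //; first by move=> j /Hreach /ReachS.
  by left.
have HaN2 : (a < N)%N by rewrite ltn_neqAle HaN' HaN.
have [a' [/andP[H1 H1'] H2 H3]] :=
  @exmax (fun j => pre j - pre a <= r) (N - a) a erefl HaN ltac:(by rewrite /= subrr).
exists a'; split => //.
- move=> j Hj; have [Hja|Hja] := leqP j a; first by apply/ReachS/Hreach.
  apply: (@ReachK _ _ _ _ (Hreach a (leqnn a))); apply: Hhop => //.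
  + exact: ltnW.
  + exact: leq_trans Hj H1'.
  + have := Hmono _ _ Hj H1'; move: H2 => /=; lra.
- have [->|Ha'N0] := eqVneq a' N; first by left.
  case: H3 => [E|H3]; first by rewrite E eqxx in Ha'N0.
  right; right.
  have Ha'N : (a' < N)%N by rewrite ltn_neqAle H1' Ha'N0.
  have := Hstep _ Ha'N; move: H3 => /=; rewrite -ltNge; lra.
Qed.

Lemma forward k : exists a, [/\ (a <= N)%N,
  (forall j, (j <= a)%N -> Reach k.+1 (v 0) (v j)) &
  a = N \/ (B <= a)%N \/ pre 0 + c *+ k.+1 < pre a].
Proof.
elim: k => [|k [a [HaN Hre Hd]]].
  have [a' [_ H1 H2 H3]] := @step 0 0 (leq0n N)
    (fun j Hj => ltac:(rewrite leqn0 in Hj; rewrite (eqP Hj); exact: Reach0)).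
  by exists a'; split => //; rewrite mulr1n.
have [a' [H0 H1 H2 H3]] := @step k.+1 a HaN Hre.
exists a'; split => //.
case: H3 => [->|[H3|H3]]; [by left|by right; left|].
case: Hd => [E|[Hd|Hd]].
- left; apply/eqP; rewrite eqn_leq H1 /=; by rewrite -E.
- by right; left; apply: leq_trans Hd H0.
- by right; right; rewrite mulrS; lra.
Qed.
End Abstract.

Section Concrete.
Variables (R : realType) (T : finType) (e : rel T) (w : T -> T -> R).

Lemma dist_cons a b c y : e a b -> (dist e w b c <= y%:E)%E ->
  (dist e w a c <= (w a b + y)%:E)%E.
Proof.
move=> Hab Hb.
have H : (dist e w a c - (w a b)%:E <= dist e w b c)%E.
  apply/ereal_infP => _ [q Hq <-].
  rewrite leeBlDl // -EFinD.
  apply: ge_ereal_inf; exists (walk_w w a (b :: q))%:E.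
    by exists (b :: q) => //; move: Hq; rewrite /gwalk /= Hab.
  by rewrite /walk_w /= big_cons.
rewrite leeBlDl // in H.
apply: (le_trans H); rewrite EFinD; exact: leeD2l.
Qed.

Lemma dist_refl a : (dist e w a a <= 0%:E)%E.
Proof.
apply: ge_ereal_inf; exists (walk_w w a [::])%:E.
  by exists [::] => //; rewrite /gwalk /= eqxx.
by rewrite /walk_w /= big_nil.
Qed.

Lemma walk_nth x0 x l : walk_w w x l =
  \sum_(k < size l) w (nth x0 (x :: l) k) (nth x0 (x :: l) k.+1).
Proof.
elim: l x => [|y l IH] x; first by rewrite /walk_w /= big_nil big_ord0.
have := IH y; rewrite /walk_w => IH'.
by rewrite /= big_cons big_ord_recl /= IH'.
Qed.

Lemma bigmax_ge (I : eqType) (r : seq I) (P : pred I) (F : I -> R) i :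
  i \in r -> P i -> F i <= \big[Num.max/0]_(j <- r | P j) F j.
Proof.
elim: r => [|x r IH] //; rewrite in_cons big_cons => /orP[/eqP <-|Hi] HP.
  by rewrite HP le_max lexx.
case: (P x); last exact: IH.
by rewrite le_max (IH Hi HP) orbT.
Qed.

Lemma bigmax_ge0 (I : Type) (r : seq I) (P : pred I) (F : I -> R) :
  0 <= \big[Num.max/0]_(j <- r | P j) F j.
Proof.
elim: r => [|x r IH]; first by rewrite big_nil.
rewrite big_cons; case: (P x) => //.
by rewrite le_max IH orbT.
Qed.

Lemma maxw_ge x y : e x y -> w x y <= maxw e w.
Proof.
move=> Hxy; rewrite /maxw.
set G := fun x => \big[Num.max/0]_(y : T | e x y) w x y.
have H1 : G x <= \big[Num.max/0]_(x : T) G x.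
  by apply: bigmax_ge => //; exact: mem_index_enum.
apply: le_trans H1.
by apply: bigmax_ge => //; exact: mem_index_enum.
Qed.

Lemma maxw_ge0 : 0 <= maxw e w.
Proof. exact: bigmax_ge0. Qed.

End Concrete.
Arguments dist_cons {R T e w a b c y}.
Arguments dist_refl {R T e w a}.
Arguments walk_nth {R T w} x0 x l.

Section PathFacts.
Variables (R : realType) (T : finType) (e : rel T) (w : T -> T -> R).
Hypothesis e_sym : symmetric e.
Hypothesis w_sym : forall x y, w x y = w y x.
Hypothesis w_ge0 : forall x y, e x y -> 0 <= w x y.
Variables (s : T) (p : seq T).
Hypothesis Hpath : path e s p.

Let v k := nth s (s :: p) k.
Let pre j := \sum_(k < j) w (v k) (v k.+1).
Let N := size p.

Lemma edge k : (k < N)%N -> e (v k) (v k.+1).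
Proof. by move=> Hk; have := (pathP s Hpath) k Hk. Qed.

Lemma preS k : pre k.+1 = pre k + w (v k) (v k.+1).
Proof. by rewrite /pre big_ord_recr. Qed.

Lemma pre0 : pre 0 = 0.
Proof. by rewrite /pre big_ord0. Qed.

Lemma pre_mono i j : (i <= j)%N -> (j <= N)%N -> pre i <= pre j.
Proof.
elim: j => [|j IH]; first by rewrite leqn0 => /eqP ->.
rewrite leq_eqVlt => /orP[/eqP -> //|Hij] HjN.
rewrite preS; have := w_ge0 _ _ (edge _ HjN); have := IH Hij (ltnW HjN); lra.
Qed.

Lemma dist_fwd i j : (i <= j)%N -> (j <= N)%N ->
  (dist e w (v i) (v j) <= (pre j - pre i)%:E)%E.
Proof.
move=> Hij HjN; move: {2}(j - i)%N (erefl (j - i)%N) => n.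
elim: n i Hij => [|n IH] i Hij Hn.
  have -> : i = j by lia.
  by rewrite subrr; exact: dist_refl.
have Hi : (i < N)%N by lia.
have := IH i.+1 ltac:(lia) ltac:(lia).
move/(dist_cons (edge _ Hi)); rewrite preS.
by have -> : w (v i) (v i.+1) + (pre j - (pre i + w (v i) (v i.+1))) = pre j - pre i
  by rewrite opprD; lra.
Qed.

Lemma dist_bwd i j : (i <= j)%N -> (j <= N)%N ->
  (dist e w (v j) (v i) <= (pre j - pre i)%:E)%E.
Proof.
elim: j => [|j IH] Hij HjN.
  have -> : i = 0%N by lia.
  by rewrite subrr; exact: dist_refl.
have [->|Hi] := eqVneq i j.+1; first by rewrite subrr; exact: dist_refl.
have Hij' : (i <= j)%N by lia.
have Hj : (j < N)%N by lia.
have := IH Hij' (ltnW Hj).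
have He : e (v j.+1) (v j) by rewrite e_sym; exact: edge.
move/(dist_cons He); rewrite preS w_sym.
by have -> : w (v j) (v j.+1) + (pre j - pre i) = pre j + w (v j) (v j.+1) - pre i
  by lra.
Qed.

Lemma walk_pre : walk_w w s p = pre N.
Proof. by rewrite (walk_nth s). Qed.

Lemma vN : v N = last s p.
Proof. by rewrite /v /N -[size p]/((size (s :: p)).-1) nth_last. Qed.

End PathFacts.

Lemma first_bad (Q : pred nat) : (exists i, Q i) ->
  exists B, Q B /\ forall i, (i < B)%N -> ~~ Q i.
Proof.
move=> exQ; case: (ex_minnP exQ) => B HB Hmin.
exists B; split => // i Hi; apply/negP => /Hmin; lia.
Qed.

Lemma ceiln_ge (R : realType) (x : R) : 0 < x -> x <= (ceiln x)%:R /\ (0 < ceiln x)%N.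
Proof.
move=> Hx.
have H0 : (0 <= Num.ceil x)%R by rewrite ceil_ge0; lra.
have E : (ceiln x)%:R = (Num.ceil x)%:~R :> R by rewrite /ceiln natr_absz; congr intmul; exact: gez0_abs.
split; first by rewrite E ceil_ge.
rewrite lt0n; apply/eqP => E0; move: E; rewrite E0 /= => E1.
have := ceil_ge x; rewrite -E1; lra.
Qed.

Lemma mul_bound (R : realType) (eps D y : R) (m : nat) : 0 < eps -> 0 <= D ->
  y / eps <= m%:R -> y * D / 2 <= (eps / 2 * D) *+ m.
Proof.
move=> He HD Hy.
have E : y = eps * (y / eps) by field; lra.
have H1 : y <= eps * m%:R by rewrite {1}E; apply: ler_wpM2l => //; lra.
have H2 : y * (D / 2) <= eps * m%:R * (D / 2) by apply: ler_wpM2r => //; lra.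
rewrite -[_ *+ m]mulr_natr.
have -> : eps / 2 * D * m%:R = eps * m%:R * (D / 2) by ring.
have -> : y * D / 2 = y * (D / 2) by ring.
exact: H2.
Qed.

Lemma contra1 (R : realType) (p0 pa pN cm : R) : p0 = 0 -> p0 + cm < pa -> pa <= pN -> pN <= cm -> False.
Proof. lra. Qed.

Lemma contra2 (R : realType) (p1 p2 pN cm : R) : cm < p1 -> pN - pN + cm < pN - p2 -> p1 <= p2 -> pN <= 2 * cm -> False.
Proof. lra. Qed.

Theorem lemma8 (R : realType) (T : finType) (e : rel T) (w : T -> T -> R)
  (e_sym : symmetric e) (w_sym : forall x y, w x y = w y x)
  (w_ge0 : forall x y, e x y -> 0 <= w x y)
  (K : nat) (K_gt0 : (0 < K)%N) (Kset : T -> {set T})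
  (HK : is_Knearest e w K Kset)
  (eps : R) (eps_gt0 : 0 < eps) (s t : T)
  (st_fin : (dist e w s t < +oo)%E)
  (p : seq T) (HP : shortest_path e w s t p) :
  let r := eps / 2 * fine (dist e w s t) + maxw e w in
  ((forall x, x \in s :: p -> x \in Vr e w Kset r) ->
     hop_reach Kset (ceiln (2 / eps)) s t /\
     exists2 x, x \in s :: p &
       (x \in Aset Kset eps s) && (x \in Aset Kset eps t)) /\
  ((exists2 x, x \in s :: p & x \notin Vr e w Kset r) ->
     exists2 x, (x \in s :: p) && (x \notin Vr e w Kset r) &
       (x \in Aset Kset eps s) || (x \in Aset Kset eps t)).
Proof.
move=> r.
case: HP => /andP[Hpath /eqP Hlast] Huniq Hw.
pose v := fun k => nth s (s :: p) k.
pose pre := fun j => \sum_(k < j) w (v k) (v k.+1).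
pose N := size p.
have Hmono : forall i j, (i <= j)%N -> (j <= N)%N -> pre i <= pre j.
  by move=> i j; apply: (@pre_mono R T e w w_ge0 s p Hpath).
have Hdf : forall i j, (i <= j)%N -> (j <= N)%N ->
    (dist e w (v i) (v j) <= (pre j - pre i)%:E)%E.
  by move=> i j; apply: (@dist_fwd R T e w s p Hpath).
have Hdb : forall i j, (i <= j)%N -> (j <= N)%N ->
    (dist e w (v j) (v i) <= (pre j - pre i)%:E)%E.
  by move=> i j; apply: (@dist_bwd R T e w e_sym w_sym s p Hpath).
have HpreS : forall k, pre k.+1 = pre k + w (v k) (v k.+1).
  by move=> k; apply: (@preS R T w s p).
have Hpre0 : pre 0 = 0 by apply: (@pre0 R T w s p).
have HvN : v N = t by rewrite -Hlast; apply: vN.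
have Hv0 : v 0%N = s by [].
have Hd : fine (dist e w s t) = pre N by rewrite -Hw /= walk_pre.
have Hedge : forall k, (k < N)%N -> w (v k) (v k.+1) <= maxw e w.
  by move=> k Hk; apply: maxw_ge; exact: (pathP s Hpath) k Hk.
have HW0 : 0 <= maxw e w by apply: maxw_ge0.
pose c := eps / 2 * pre N.
have Hr : r = c + maxw e w by rewrite /r Hd.
have HpN0 : 0 <= pre N by rewrite -Hpre0; apply: Hmono.
have Hc0 : 0 <= c by rewrite /c; apply: mulr_ge0 => //; apply: divr_ge0; lra.
have Hr0 : 0 <= r by rewrite Hr; lra.
have Hstep : forall k, (k < N)%N -> pre k.+1 - pre k <= r - c.
  by move=> k Hk; rewrite HpreS Hr; have := Hedge k Hk; lra.
have Hmem : forall k, (k <= N)%N -> v k \in s :: p.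
  by move=> k Hk; apply: mem_nth.
have HixN : forall x, x \in s :: p -> (index x (s :: p) <= N)%N.
  by move=> x Hx; have := index_mem x (s :: p); rewrite Hx /=.
have Hvix : forall x, x \in s :: p -> v (index x (s :: p)) = x.
  by move=> x Hx; rewrite /v nth_index.
pose v' := fun k => v (N - k)%N.
pose pre' := fun j => pre N - pre (N - j)%N.
have Hstep' : forall k, (k < N)%N -> pre' k.+1 - pre' k <= r - c.
  move=> k Hk; rewrite /pre'.
  have E : (N - k = (N - k.+1).+1)%N by clear -Hk; lia.
  rewrite E HpreS; have := Hedge (N - k.+1)%N ltac:(clear -Hk; lia); rewrite Hr; lra.
have Hmono' : forall i j, (i <= j)%N -> (j <= N)%N -> pre' i <= pre' j.
  move=> i j Hij HjN; have := Hmono (N - j)%N (N - i)%N ltac:(clear -Hij HjN; lia) ltac:(clear -Hij HjN; lia).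
  rewrite /pre'; lra.
have Hhop : forall B, (forall i, (i < B)%N -> (i <= N)%N -> v i \in Vr e w Kset r) ->
    forall i j, (i <= j)%N -> (j <= N)%N -> (i < B)%N -> pre j - pre i <= r ->
    v j \in Kset (v i).
  move=> B HB i j Hij HjN HiB Hle.
  have := HB i HiB (leq_trans Hij HjN); rewrite inE => /fintype.subsetP; apply.
  rewrite inE; apply: le_trans (Hdf i j Hij HjN) _; by rewrite lee_fin.
have Hhop' : forall B, (forall i, (i < B)%N -> (i <= N)%N -> v (N - i)%N \in Vr e w Kset r) ->
    forall i j, (i <= j)%N -> (j <= N)%N -> (i < B)%N -> pre' j - pre' i <= r ->
    v' j \in Kset (v' i).
  move=> B HB i j Hij HjN HiB Hle.
  have := HB i HiB (leq_trans Hij HjN); rewrite inE => /fintype.subsetP; apply.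
  rewrite inE; apply: le_trans (Hdb (N - j)%N (N - i)%N ltac:(clear -Hij HjN; lia) ltac:(clear -Hij HjN; lia)) _.
  by rewrite lee_fin; move: Hle; rewrite /pre'; lra.
have [Hm Hm0] := @ceiln_ge R eps^-1 ltac:(by rewrite invr_gt0).
have [Hm2 Hm20] : 2 / eps <= (ceiln (2 / eps))%:R /\ (0 < ceiln (2 / eps))%N.
  by apply: ceiln_ge; apply: divr_gt0.
have Hb1 : pre N <= 2 * (c *+ ceiln eps^-1).
  have := @mul_bound R eps (pre N) 1 (ceiln eps^-1) eps_gt0 HpN0 ltac:(by rewrite mul1r).
  rewrite /c; lra.
have Hb2 : pre N <= c *+ ceiln (2 / eps).
  have := @mul_bound R eps (pre N) 2 (ceiln (2 / eps)) eps_gt0 HpN0 Hm2.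
  rewrite /c; lra.
set m := ceiln eps^-1 in Hm Hm0 Hb1 *.
set m2 := ceiln (2 / eps) in Hm2 Hm20 Hb2 *.
have [m' Em] : exists m', m = m'.+1 by exists m.-1; rewrite prednK.
have [m2' Em2] : exists m', m2 = m'.+1 by exists m2.-1; rewrite prednK.
have Hcontra : forall a1 a2, (a1 <= N - a2)%N -> (a2 <= N)%N ->
    pre 0 + c *+ m < pre a1 -> pre' 0 + c *+ m < pre' a2 -> False.
  move=> a1 a2 H12 H2N Ha1 Ha2.
  have H := Hmono a1 (N - a2)%N H12 (leq_subr _ _).
  move: Ha2 Ha1; rewrite /pre' /= subn0 Hpre0 add0r => Ha2 Ha1; exact: (@contra2 _ _ _ _ _ Ha1 Ha2 H Hb1).
split.
  move=> HV.
  have HB : forall i, (i < N.+1)%N -> (i <= N)%N -> v i \in Vr e w Kset r.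
    by move=> i _ Hi; apply: HV; apply: Hmem.
  have HB' : forall i, (i < N.+1)%N -> (i <= N)%N -> v (N - i)%N \in Vr e w Kset r.
    by move=> i _ Hi; apply: HV; apply: Hmem; exact: leq_subr.
  split.
    have [a [HaN Hre Hda]] := @forward R T Kset v pre N r c _ (Hhop _ HB) Hstep Hmono Hr0 m2'.
    rewrite -Em2 in Hre Hda.
    have Ha : a = N.
      case: Hda => [//|[H|H]]; first by clear -H HaN; lia.
      exfalso; exact: (@contra1 _ _ _ _ _ Hpre0 H (Hmono a N HaN (leqnn N)) Hb2).
    rewrite -Hv0 -HvN -/m2; apply: Reach_hop; apply: Hre; by rewrite Ha.
  have [a1 [Ha1N Hre1 Hd1]] := @forward R T Kset v pre N r c _ (Hhop _ HB) Hstep Hmono Hr0 m'.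
  have [a2 [Ha2N Hre2 Hd2]] := @forward R T Kset v' pre' N r c _ (Hhop' _ HB') Hstep' Hmono' Hr0 m'.
  rewrite -Em in Hre1 Hd1 Hre2 Hd2.
  have Hle : (N - a2 <= a1)%N.
    case: (leqP (N - a2)%N a1) => // Hlt; exfalso.
    case: Hd1 => [E|[H|Hd1]]; first by clear -E Hlt; lia. by clear -H Ha1N; lia.
    case: Hd2 => [E|[H|Hd2]]; first by clear -E Hlt; lia. by clear -H Ha2N; lia.
    exact: (Hcontra a1 a2 (ltnW Hlt) Ha2N Hd1 Hd2).
  exists (v (N - a2)%N); first by apply: Hmem; exact: leq_subr.
  rewrite /Aset !inE -/m; apply/andP; split; apply: Reach_hop.
    by rewrite -Hv0; apply: Hre1.
  have := Hre2 a2 (leqnn a2); by rewrite /v' subn0 HvN.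
case=> x0 Hx0 Hbad.
have Hix := HixN x0 Hx0.
have {Hvix} Hvix := Hvix x0 Hx0.
have Ex1 : exists i, (i <= N)%N && (v i \notin Vr e w Kset r).
  by exists (index x0 (s :: p)); rewrite Hix Hvix.
have Ex2 : exists i, (i <= N)%N && (v (N - i)%N \notin Vr e w Kset r).
  by exists (N - index x0 (s :: p))%N; rewrite leq_subr subKn // Hvix.
have [B1 [/andP[HB1N HB1bad] HB1min]] :=
  @first_bad (fun i => (i <= N)%N && (v i \notin Vr e w Kset r)) Ex1.
have [B2 [/andP[HB2N HB2bad] HB2min]] :=
  @first_bad (fun i => (i <= N)%N && (v (N - i)%N \notin Vr e w Kset r)) Ex2.
have HB : forall i, (i < B1)%N -> (i <= N)%N -> v i \in Vr e w Kset r.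
  by move=> i Hi HiN; have := HB1min i Hi; rewrite /= HiN /= negbK.
have HB' : forall i, (i < B2)%N -> (i <= N)%N -> v (N - i)%N \in Vr e w Kset r.
  by move=> i Hi HiN; have := HB2min i Hi; rewrite /= HiN /= negbK.
have [a1 [Ha1N Hre1 Hd1]] := @forward R T Kset v pre N r c _ (Hhop _ HB) Hstep Hmono Hr0 m'.
have [a2 [Ha2N Hre2 Hd2]] := @forward R T Kset v' pre' N r c _ (Hhop' _ HB') Hstep' Hmono' Hr0 m'.
rewrite -Em in Hre1 Hd1 Hre2 Hd2.
have [HBa1|HBa1] := leqP B1 a1.
  exists (v B1); first by rewrite Hmem.
  rewrite /Aset !inE -/m; apply/orP; left; apply: Reach_hop.
  by rewrite -Hv0; apply: Hre1.
have [HBa2|HBa2] := leqP B2 a2.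
  exists (v (N - B2)%N); first by rewrite Hmem ?leq_subr.
  rewrite /Aset !inE -/m; apply/orP; right; apply: Reach_hop.
  have := Hre2 B2 HBa2; by rewrite /v' subn0 HvN.
exfalso.
have HB12 : (B1 <= N - B2)%N.
  case: (leqP B1 (N - B2)%N) => // Hlt.
  by have := HB1min _ Hlt; rewrite /= leq_subr HB2bad.
case: Hd1 => [E|[H|Hd1]]; first by clear -E HBa1 HB1N; lia. by clear -H HBa1; lia.
case: Hd2 => [E|[H|Hd2]]; first by clear -E HBa2 HB2N; lia. by clear -H HBa2; lia.
exact: (Hcontra a1 a2 ltac:(clear -HBa1 HB12 HBa2 HB2N; lia) Ha2N Hd1 Hd2).
Qed.
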